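(* Let $m\in\mathbb{N}$, $d_1,\dots,d_m\in\mathbb{R}$, $\alpha_1,\dots,\alpha_m>0$, $\beta>0$, $\nu\in\mathbb{R}$, and let $G(\gamma)=\sum_{i=1}^{m}\frac{d_i\Gamma(1+\gamma)}{\Gamma(1+\gamma-\alpha_i)}$. Let $\gamma>-1$ be a root of multiplicity two of $G(\gamma)=\nu^2$ (i.e. $G(\gamma)=\nu^2$, $G'(\gamma)=0$, $G''(\gamma)\neq0$), and suppose there is no positive integer $n$ such that $\gamma+\beta n$ is another root of $G=\nu^2$. For $n\ge1$ set $$A_n=\sum_{i=1}^{m}\frac{d_i\Gamma(1+\gamma+\beta n)}{\Gamma(1+\gamma+\beta n-\alpha_i)},\qquad B_n=\sum_{i=1}^{m}\frac{d_i\Gamma(1+\gamma+\beta n)}{\Gamma(1+\gamma+\beta n-\alpha_i)}\big[\psi(1+\gamma+\beta n)-\psi(1+\gamma+\beta n-\alpha_i)\big],$$ let $c_0^1,c_0^2$ be arbitrary constants and define recursively for $n\ge0$ $$c_{n+1}^1=-\frac{c_n^1}{A_{n+1}-\nu^2},\qquad c_{n+1}^2=-\frac{c_n^2+c_{n+1}^1B_{n+1}}{A_{n+1}-\nu^2}.$$ Then the series $$u(x)=\ln x\sum_{n=0}^{\infty}c_n^1x^{\gamma+\beta n}+\sum_{n=0}^{\infty}c_n^2x^{\gamma+\beta n}$$ converges pointwise for every $x>0$.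
   Context: $\psi=\Gamma'/\Gamma$ is the digamma function. Quotients of Gamma functions are understood with $1/\Gamma$ entire. This series is the candidate second (logarithmic) solution of $\sum_{i=1}^{m}d_i x^{\alpha_i}D^{\alpha_i}u(x)+(x^\beta-\nu^2)u(x)=0$ with Caputo derivatives $D^{\alpha}$, associated with a double root of the characteristic equation. *)

(* Defs.v *)
From Stdlib Require Import Reals.
From Coquelicot Require Import Coquelicot.
Open Scope R_scope.

Fixpoint sumR (m : nat) (f : nat -> R) : R :=
  match m with O => 0 | S k => sumR k f + f k end.

(* Reciprocal Gamma function 1/Gamma, an entire function, defined by Gauss'
   product formula: 1/Gamma(x) = lim_n x(x+1)...(x+n) / (n! n^x).
   It vanishes exactly at the non-positive integers. *)
Fixpoint pochR (x : R) (n : nat) : R :=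
  match n with O => x | S k => pochR x k * (x + INR (S k)) end.

Definition rgamma (x : R) : R :=
  real (Lim_seq (fun n => pochR x (S n) / (INR (Factorial.fact (S n)) * exp (x * ln (INR (S n)))))).

(* Quotient Gamma(a)/Gamma(b), understood with 1/Gamma entire. *)
Definition gratio (a b : R) : R := rgamma b / rgamma a.

(* Gamma(a)/Gamma(b) * (psi(a) - psi(b)), psi = Gamma'/Gamma the digamma function,
   understood with 1/Gamma entire: since psi = -(1/Gamma)'/(1/Gamma), this equals
   ((1/Gamma)'(b) (1/Gamma)(a) - (1/Gamma)(b) (1/Gamma)'(a)) / (1/Gamma)(a)^2. *)
Definition gratio_psi (a b : R) : R :=
  (Derive rgamma b * rgamma a - rgamma b * Derive rgamma a) / (rgamma a ^ 2).

Definition Gfun (m : nat) (d alpha : nat -> R) (g : R) : R :=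
  sumR m (fun i => d i * gratio (1 + g) (1 + g - alpha i)).

Definition A_n (m : nat) (d alpha : nat -> R) (beta gamma : R) (n : nat) : R :=
  Gfun m d alpha (gamma + beta * INR n).

Definition B_n (m : nat) (d alpha : nat -> R) (beta gamma : R) (n : nat) : R :=
  sumR m (fun i => d i * gratio_psi (1 + gamma + beta * INR n)
                                     (1 + gamma + beta * INR n - alpha i)).

Fixpoint coef1 (m : nat) (d alpha : nat -> R) (beta gamma nu c10 : R) (n : nat) : R :=
  match n with
  | O => c10
  | S k => - coef1 m d alpha beta gamma nu c10 k / (A_n m d alpha beta gamma (S k) - nu ^ 2)
  end.

Fixpoint coef2 (m : nat) (d alpha : nat -> R) (beta gamma nu c10 c20 : R) (n : nat) : R :=
  match n with
  | O => c20
  | S k => - (coef2 m d alpha beta gamma nu c10 c20 k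
              + coef1 m d alpha beta gamma nu c10 (S k) * B_n m d alpha beta gamma (S k))
           / (A_n m d alpha beta gamma (S k) - nu ^ 2)
  end.

(* Main.v *)
Require Import Defs.
From Stdlib Require Import Reals Lra Lia List.
From Coquelicot Require Import Coquelicot.
Open Scope R_scope.


Lemma ln_le_sub1 (w : R) : 0 < w -> ln w <= w - 1.
Proof. intros Hw. pose proof (exp_ineq1_le (ln w)). rewrite exp_ln in H; lra. Qed.

Lemma lnineq (p q : R) : 0 < p -> 0 < q ->
  (p - q) / p <= ln p - ln q <= (p - q) / q.
Proof.
  intros Hp Hq. split.
  - pose proof (ln_le_sub1 (q / p) (Rdiv_lt_0_compat _ _ Hq Hp)).
    rewrite ln_div in H by lra.
    assert (q / p - 1 = - ((p - q) / p)) by (field; lra). lra.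
  - pose proof (ln_le_sub1 (p / q) (Rdiv_lt_0_compat _ _ Hp Hq)).
    rewrite ln_div in H by lra.
    assert (p / q - 1 = ((p - q) / q)) by (field; lra). lra.
Qed.

Lemma pochR_pos (x : R) n : 0 < x -> 0 < pochR x n.
Proof.
  intros Hx; induction n; auto.
  change (pochR x (S n)) with (pochR x n * (x + INR (S n))).
  apply Rmult_lt_0_compat; auto. pose proof (pos_INR (S n)). lra.
Qed.

Lemma ln_pochR (x : R) n : 0 < x -> ln (pochR x n) = sum_f_R0 (fun k => ln (x + INR k)) n.
Proof.
  intros Hx; induction n.
  - simpl. rewrite Rplus_0_r. reflexivity.
  - change (pochR x (S n)) with (pochR x n * (x + INR (S n))).
    rewrite ln_mult. rewrite IHn. reflexivity. apply pochR_pos; auto.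
    pose proof (pos_INR (S n)); lra.
Qed.

Definition term (x : R) (n : nat) : R :=
  pochR x (S n) / (INR (Factorial.fact (S n)) * exp (x * ln (INR (S n)))).

Lemma rgamma_term x : rgamma x = real (Lim_seq (term x)).
Proof. reflexivity. Qed.

Definition lnN (x : R) (n : nat) : R :=
  sum_f_R0 (fun k => ln (x + INR k)) (S n) - ln (INR (Factorial.fact (S n))) - x * ln (INR (S n)).

Lemma fact_pos n : 0 < INR (Factorial.fact n).
Proof. apply lt_0_INR. apply Factorial.lt_O_fact. Qed.

Lemma term_pos x n : 0 < x -> 0 < term x n.
Proof.
  intros Hx. unfold term. apply Rdiv_lt_0_compat. apply pochR_pos; auto.
  apply Rmult_lt_0_compat. apply fact_pos. apply exp_pos.
Qed.

Lemma ln_term x n : 0 < x -> ln (term x n) = lnN x n.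
Proof.
  intros Hx. unfold term, lnN.
  rewrite ln_div, ln_mult, ln_exp, ln_pochR; auto.
  ring. apply fact_pos. apply exp_pos. apply pochR_pos; auto.
  apply Rmult_lt_0_compat. apply fact_pos. apply exp_pos.
Qed.

Lemma term_exp x n : 0 < x -> term x n = exp (lnN x n).
Proof. intros Hx. rewrite <- ln_term, exp_ln; auto. apply term_pos; auto. Qed.

Lemma lnN_step x n : 0 < x ->
  lnN x (S n) - lnN x n = (ln (x + INR (S (S n))) - ln (INR (S (S n))))
     - x * (ln (INR (S (S n))) - ln (INR (S n))).
Proof.
  intros Hx. unfold lnN.
  change (sum_f_R0 (fun k => ln (x + INR k)) (S (S n))) with
    (sum_f_R0 (fun k => ln (x + INR k)) (S n) + ln (x + INR (S (S n)))).
  change (Factorial.fact (S (S n))) with ((S (S n)) * Factorial.fact (S n))%nat.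
  rewrite mult_INR, ln_mult. ring.
  apply lt_0_INR; lia. apply fact_pos.
Qed.

Definition lamN (x : R) (n : nat) : R :=
  sum_f_R0 (fun k => / (x + INR k)) (S n) - ln (INR (S n)).

Lemma lim_invS : is_lim_seq (fun n => / INR (S n)) 0.
Proof.
  assert (H := is_lim_seq_inv _ _ is_lim_seq_INR).
  simpl in H. apply (is_lim_seq_incr_1 (fun n => / INR n)). apply H. discriminate.
Qed.

Lemma tele_conv (u : nat -> R) (C : R) :
  (forall n, Rabs (u (S n) - u n) <= C * (/ INR (S n) - / INR (S (S n)))) ->
  ex_finite_lim_seq u.
Proof.
  intros H.
  destruct (ex_lim_seq_adj (fun n => u n - C * / INR (S n)) (fun n => u n + C * / INR (S n)))
    as [[l Hl] _].
  - intros n. specialize (H n). apply Rabs_le_between in H. lra.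
  - intros n. specialize (H n). apply Rabs_le_between in H. lra.
  - apply is_lim_seq_ext with (fun n => 2 * C * / INR (S n)).
    intros; ring.
    replace (Finite 0) with (Rbar_mult (2 * C) 0) by (simpl; f_equal; ring).
    apply is_lim_seq_scal_l. apply lim_invS.
  - exists (l + C * 0).
    apply is_lim_seq_ext with (fun n => (u n - C * / INR (S n)) + C * / INR (S n)).
    intros; ring.
    apply (is_lim_seq_plus' _ _ l (C * 0)). auto.
    pose proof (is_lim_seq_scal_l _ C 0 lim_invS) as H'; simpl in H'; exact H'.
Qed.

Lemma aux_frac (x s : R) : 0 <= x -> 0 < s ->
  / s - / (x + s + 1) <= (x + 1) * (/ s - / (s + 1)).
Proof.
  intros Hx Hs.
  replace (/ s - / (x + s + 1)) with ((x + 1) * / (s * (x + s + 1))) by (field; lra).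
  replace (/ s - / (s + 1)) with (/ (s * (s + 1))) by (field; lra).
  apply Rmult_le_compat_l. lra.
  apply Rinv_le_contravar. apply Rmult_lt_0_compat; lra.
  apply Rmult_le_compat_l; lra.
Qed.

Lemma INR_SS n : INR (S (S n)) = INR (S n) + 1.
Proof. rewrite S_INR; reflexivity. Qed.

Lemma lnN_step_bound x n : 0 < x ->
  Rabs (lnN x (S n) - lnN x n) <= (x * (x + 1)) * (/ INR (S n) - / INR (S (S n))).
Proof.
  intros Hx. rewrite lnN_step by auto.
  set (s := INR (S n)). set (t := INR (S (S n))).
  assert (Hs : 0 < s) by (apply lt_0_INR; lia).
  assert (Ht : t = s + 1) by (apply INR_SS).
  destruct (lnineq (x + t) t) as [A1 A2]; try lra.
  destruct (lnineq t s) as [B1 B2]; try lra.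
  replace (x + t - t) with x in A1, A2 by ring.
  replace (t - s) with 1 in B1, B2 by lra.
  assert (x * (1 / t) <= x * (ln t - ln s) <= x * (1 / s)).
  { split; apply Rmult_le_compat_l; lra. }
  assert (x / t = x * (1/t)) by (field; lra).
  assert (x / (x + t) = x * / (x + t)) by (field; lra).
  assert (x * (1 / s) = x * / s) by (field; lra).
  pose proof (aux_frac x s (Rlt_le _ _ Hx) Hs).
  assert (x * (/ s - / (x + s + 1)) <= x * ((x + 1) * (/ s - / (s + 1)))).
  { apply Rmult_le_compat_l; lra. }
  rewrite Ht in *. apply Rabs_le. split.
  - replace (x + (s + 1)) with (x + s + 1) in * by ring. nra.
  - nra.
Qed.

Lemma lamN_step x n :
  lamN x (S n) - lamN x n = / (x + INR (S (S n))) - (ln (INR (S (S n))) - ln (INR (S n))).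
Proof.
  unfold lamN.
  change (sum_f_R0 (fun k => / (x + INR k)) (S (S n))) with
    (sum_f_R0 (fun k => / (x + INR k)) (S n) + / (x + INR (S (S n)))).
  ring.
Qed.

Lemma lamN_step_bound x n : 0 <= x ->
  Rabs (lamN x (S n) - lamN x n) <= (x + 1) * (/ INR (S n) - / INR (S (S n))).
Proof.
  intros Hx. rewrite lamN_step.
  set (s := INR (S n)). set (t := INR (S (S n))).
  assert (Hs : 0 < s) by (apply lt_0_INR; lia).
  assert (Ht : t = s + 1) by (apply INR_SS).
  destruct (lnineq t s) as [B1 B2]; try lra.
  replace (t - s) with 1 in B1, B2 by lra.
  pose proof (aux_frac x s Hx Hs).
  assert (/ (x + t) <= / t) by (apply Rinv_le_contravar; lra).
  assert (1 / t = / t) by (field; lra). assert (1 / s = / s) by (field; lra).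
  rewrite Ht in *. replace (x + (s + 1)) with (x + s + 1) in * by ring.
  apply Rabs_le. split; lra.
Qed.

Lemma lim_real (u : nat -> R) : ex_finite_lim_seq u -> is_lim_seq u (real (Lim_seq u)).
Proof.
  intros [l Hl]. rewrite (is_lim_seq_unique _ _ Hl). exact Hl.
Qed.

Definition ell (x : R) : R := real (Lim_seq (lnN x)).
Definition lam (x : R) : R := real (Lim_seq (lamN x)).

Lemma ell_lim x : 0 < x -> is_lim_seq (lnN x) (ell x).
Proof.
  intros Hx. apply lim_real. apply (tele_conv _ (x * (x + 1))).
  intros n; apply lnN_step_bound; auto.
Qed.

Lemma lam_lim x : 0 < x -> is_lim_seq (lamN x) (lam x).
Proof.
  intros Hx. apply lim_real. apply (tele_conv _ (x + 1)).
  intros n; apply lamN_step_bound; lra.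
Qed.

Lemma rgamma_exp x : 0 < x -> rgamma x = exp (ell x).
Proof.
  intros Hx. rewrite rgamma_term.
  assert (H : is_lim_seq (term x) (exp (ell x))).
  { apply is_lim_seq_ext with (fun n => exp (lnN x n)).
    intros n; rewrite term_exp; auto.
    apply is_lim_seq_continuous. apply derivable_continuous_pt, derivable_pt_exp.
    apply ell_lim; auto. }
  rewrite (is_lim_seq_unique _ _ H). reflexivity.
Qed.

Lemma lim_le_const (u : nat -> R) (L M : R) :
  is_lim_seq u L -> (forall n, u n <= M) -> L <= M.
Proof.
  intros H Hb. assert (Rbar_le L M).
  { apply (is_lim_seq_le u (fun _ => M)); auto. apply is_lim_seq_const. }
  exact H0.
Qed.

Lemma lim_ge_const (u : nat -> R) (L M : R) :
  is_lim_seq u L -> (forall n, M <= u n) -> M <= L.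
Proof.
  intros H Hb. assert (Rbar_le M L).
  { apply (is_lim_seq_le (fun _ => M) u); auto. apply is_lim_seq_const. }
  exact H0.
Qed.

Lemma lim_abs_le (u : nat -> R) (L M : R) :
  is_lim_seq u L -> (forall n, Rabs (u n) <= M) -> Rabs L <= M.
Proof.
  intros H Hb. apply (lim_le_const (fun n => Rabs (u n))); auto.
  apply (is_lim_seq_abs u L H).
Qed.

Lemma lim_ge_eps (u : nat -> R) (L c e : R) :
  is_lim_seq u L -> (forall n, c - e * / INR (S n) <= u n) -> c <= L.
Proof.
  intros H Hb. assert (Rbar_le (c - e * 0) L).
  { apply (is_lim_seq_le (fun n => c - e * / INR (S n)) u); auto.
    apply (is_lim_seq_minus' _ _ c (e * 0)). apply is_lim_seq_const.
    pose proof (is_lim_seq_scal_l _ e 0 lim_invS) as H'; simpl in H'; exact H'. }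
  simpl in H0. lra.
Qed.

Lemma harm_bounds y N : 0 < y ->
  ln (y + INR N + 1) - ln y <= sum_f_R0 (fun k => / (y + INR k)) N <= / y + (ln (y + INR N) - ln y).
Proof.
  intros Hy. pose proof (pos_INR N) as HN. induction N.
  - simpl. rewrite Rplus_0_r. destruct (lnineq (y + 1) y) as [_ A]; lra.
  - change (sum_f_R0 (fun k => / (y + INR k)) (S N)) with
      (sum_f_R0 (fun k => / (y + INR k)) N + / (y + INR (S N))).
    rewrite S_INR in *. pose proof (pos_INR N).
    destruct IHN as [I1 I2]; try lra.
    destruct (lnineq (y + (INR N + 1) + 1) (y + INR N + 1)) as [_ A]; try lra.
    destruct (lnineq (y + (INR N + 1)) (y + INR N)) as [B _]; try lra.
    replace ((y + (INR N + 1) + 1 - (y + INR N + 1)) / (y + INR N + 1)) with (/ (y + (INR N + 1))) in A by (field; lra).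
    replace ((y + (INR N + 1) - (y + INR N)) / (y + (INR N + 1))) with (/ (y + (INR N + 1))) in B by (field; lra).
    replace (y + INR N + 1) with (y + (INR N + 1)) in * by ring.
    lra.
Qed.

Lemma sq_bound y N : 0 < y ->
  sum_f_R0 (fun k => / (y + INR k) ^ 2) N <= / y ^ 2 + / y - / (y + INR N).
Proof.
  intros Hy. induction N.
  - simpl. rewrite Rplus_0_r. lra.
  - change (sum_f_R0 (fun k => / (y + INR k) ^ 2) (S N)) with
      (sum_f_R0 (fun k => / (y + INR k) ^ 2) N + / (y + INR (S N)) ^ 2).
    rewrite S_INR. pose proof (pos_INR N).
    assert (/ (y + (INR N + 1)) ^ 2 <= / (y + INR N) - / (y + (INR N + 1))).
    { replace (/ (y + INR N) - / (y + (INR N + 1))) with (/ ((y + INR N) * (y + (INR N + 1)))) by (field; lra).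
      apply Rinv_le_contravar. apply Rmult_lt_0_compat; lra.
      simpl. rewrite Rmult_1_r. apply Rmult_le_compat_r; lra. }
    lra.
Qed.

Lemma sq_bound' y N : 0 < y -> sum_f_R0 (fun k => / (y + INR k) ^ 2) N <= / y ^ 2 + / y.
Proof.
  intros Hy. pose proof (sq_bound y N Hy). pose proof (pos_INR N).
  assert (0 < / (y + INR N)) by (apply Rinv_0_lt_compat; lra). lra.
Qed.

Lemma sum_lin3 (f g e : nat -> R) (h : R) N :
  sum_f_R0 (fun k => f k - g k - h * e k) N = sum_f_R0 f N - sum_f_R0 g N - h * sum_f_R0 e N.
Proof. induction N; simpl; [ring | rewrite IHN; ring]. Qed.

Lemma sum_lin2 (f g : nat -> R) N :
  sum_f_R0 (fun k => f k - g k) N = sum_f_R0 f N - sum_f_R0 g N.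
Proof. induction N; simpl; [ring | rewrite IHN; ring]. Qed.

Lemma sum_scal_l (c : R) (f : nat -> R) N :
  sum_f_R0 (fun k => c * f k) N = c * sum_f_R0 f N.
Proof. induction N; simpl; [ring | rewrite IHN; ring]. Qed.

Lemma rem_bound x0 h n : 0 < x0 -> Rabs h <= x0 / 2 ->
  Rabs (lnN (x0 + h) n - lnN x0 n - h * lamN x0 n) <= 2 * h ^ 2 * (/ x0 ^ 2 + / x0).
Proof.
  intros Hx Hh.
  assert (E : lnN (x0 + h) n - lnN x0 n - h * lamN x0 n =
     sum_f_R0 (fun k => ln (x0 + h + INR k) - ln (x0 + INR k) - h * / (x0 + INR k)) (S n)).
  { rewrite sum_lin3. unfold lnN, lamN. ring. }
  rewrite E. eapply Rle_trans. apply sum_f_R0_triangle.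
  eapply Rle_trans.
  2:{ apply Rmult_le_compat_l. 2: apply (sq_bound' x0 (S n) Hx).
      pose proof (pow2_ge_0 h); lra. }
  assert (G : forall N, sum_f_R0 (fun k => 2 * h ^ 2 * / (x0 + INR k) ^ 2) N
                = 2 * h ^ 2 * sum_f_R0 (fun k => / (x0 + INR k) ^ 2) N).
  { intros N; apply sum_scal_l. }
  rewrite <- G. apply sum_Rle. intros k _.
  pose proof (pos_INR k). apply Rabs_le_between in Hh.
  set (q := x0 + INR k). set (p := x0 + h + INR k).
  assert (Hq : 0 < q) by (unfold q; lra).
  assert (Hp : q / 2 <= p) by (unfold p, q; lra).
  assert (Hp' : 0 < p) by lra.
  destruct (lnineq p q Hp' Hq) as [A B].
  replace (p - q) with h in A, B by (unfold p, q; ring).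
  assert (h / q - h / p = h ^ 2 * / (p * q)) by (unfold p, q in *; field; lra).
  assert (/ (p * q) <= 2 * / q ^ 2).
  { replace (2 * / q ^ 2) with (/ (q / 2 * q)) by (field; lra).
    apply Rinv_le_contravar. apply Rmult_lt_0_compat; lra.
    apply Rmult_le_compat_r; lra. }
  assert (h ^ 2 * / (p * q) <= h ^ 2 * (2 * / q ^ 2)).
  { apply Rmult_le_compat_l; auto. apply pow2_ge_0. }
  assert (h * / q = h / q) by (unfold Rdiv; ring).
  apply Rabs_le. split; nra.
Qed.

Lemma ell_taylor x0 h : 0 < x0 -> Rabs h <= x0 / 2 ->
  Rabs (ell (x0 + h) - ell x0 - h * lam x0) <= 2 * h ^ 2 * (/ x0 ^ 2 + / x0).
Proof.
  intros Hx Hh. pose proof (proj1 (Rabs_le_between _ _) Hh).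
  apply (lim_abs_le (fun n => lnN (x0 + h) n - lnN x0 n - h * lamN x0 n)).
  - apply (is_lim_seq_minus' _ _ (ell (x0 + h) - ell x0) (h * lam x0)).
    apply is_lim_seq_minus'; apply ell_lim; lra.
    pose proof (is_lim_seq_scal_l _ h _ (lam_lim x0 Hx)) as H'; simpl in H'; exact H'.
  - intros n; apply rem_bound; auto.
Qed.

Lemma ell_deriv x0 : 0 < x0 -> derivable_pt_lim ell x0 (lam x0).
Proof.
  intros Hx eps Heps.
  set (K := / x0 ^ 2 + / x0).
  assert (HK : 0 < K).
  { unfold K. assert (0 < / x0) by (apply Rinv_0_lt_compat; lra).
    assert (0 < / x0 ^ 2) by (apply Rinv_0_lt_compat; apply pow_lt; lra). lra. }
  assert (Hd : 0 < Rmin (x0 / 2) (eps / (2 * K + 1))).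
  { apply Rmin_pos. lra. apply Rdiv_lt_0_compat; lra. }
  exists (mkposreal _ Hd). intros h Hh0 Hh. simpl in Hh.
  pose proof (Rmin_l (x0 / 2) (eps / (2 * K + 1))).
  pose proof (Rmin_r (x0 / 2) (eps / (2 * K + 1))).
  pose proof (ell_taylor x0 h Hx ltac:(lra)). fold K in H1.
  replace ((ell (x0 + h) - ell x0) / h - lam x0) with ((ell (x0 + h) - ell x0 - h * lam x0) / h) by (field; auto).
  unfold Rdiv. rewrite Rabs_mult, Rabs_inv.
  assert (Ha : 0 < Rabs h) by (apply Rabs_pos_lt; auto).
  apply (Rmult_lt_reg_r (Rabs h)); auto.
  rewrite Rmult_assoc, Rinv_l, Rmult_1_r by lra.
  assert (h ^ 2 = Rabs h * Rabs h).
  { rewrite <- Rabs_mult. simpl. rewrite Rmult_1_r. symmetry. apply Rabs_pos_eq. nra. }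
  rewrite H2 in H1.
  assert (Rabs h * (2 * K + 1) < eps).
  { assert (Rabs h < eps / (2 * K + 1)) by lra.
    apply (Rmult_lt_compat_r (2 * K + 1)) in H3; [|lra].
    replace (eps / (2 * K + 1) * (2 * K + 1)) with eps in H3 by (field; lra). lra. }
  nra.
Qed.

Lemma rgamma_derive x : 0 < x -> Derive rgamma x = rgamma x * lam x.
Proof.
  intros Hx. apply is_derive_unique.
  apply (is_derive_ext_loc (fun t => exp (ell t))).
  - assert (L : locally x (fun t => 0 < t)) by (apply (open_gt 0); auto).
    apply (filter_imp (fun t => 0 < t)); auto.
    intros t Ht. symmetry. apply rgamma_exp; auto.
  - rewrite rgamma_exp by auto.
    replace (exp (ell x) * lam x) with (scal (lam x) (exp (ell x))).
    2:{ rewrite Rmult_comm. reflexivity. }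
    apply (is_derive_comp exp ell x).
    + apply is_derive_Reals. apply derivable_pt_lim_exp.
    + apply is_derive_Reals. apply ell_deriv; auto.
Qed.

Lemma gratio_exp a b : 0 < a -> 0 < b -> gratio a b = exp (ell b - ell a).
Proof.
  intros Ha Hb. unfold gratio. rewrite !rgamma_exp by auto.
  unfold Rminus; rewrite exp_plus, exp_Ropp. reflexivity.
Qed.

Lemma gratio_psi_eq a b : 0 < a -> 0 < b -> gratio_psi a b = gratio a b * (lam b - lam a).
Proof.
  intros Ha Hb. unfold gratio_psi, gratio. rewrite !rgamma_derive by auto.
  assert (rgamma a <> 0) by (rewrite rgamma_exp by auto; apply Rgt_not_eq, exp_pos).
  field; auto.
Qed.

Lemma D_eq a b n : lnN b n - lnN a n =
  sum_f_R0 (fun k => ln (b + INR k) - ln (a + INR k)) (S n) + (a - b) * ln (INR (S n)).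
Proof. rewrite sum_lin2; unfold lnN; ring. Qed.

Lemma D_lim a b : 0 < a -> 0 < b -> is_lim_seq (fun n => lnN b n - lnN a n) (ell b - ell a).
Proof. intros; apply is_lim_seq_minus'; apply ell_lim; auto. Qed.

Lemma ell_upper a b : 0 < b -> b < a -> ell b - ell a <= (a - b) * ln a.
Proof.
  intros Hb Hab. apply (lim_le_const _ _ _ (D_lim a b ltac:(lra) Hb)).
  intros n. rewrite D_eq.
  assert (S1 : sum_f_R0 (fun k => ln (b + INR k) - ln (a + INR k)) (S n)
         <= sum_f_R0 (fun k => - (a - b) * / (a + INR k)) (S n)).
  { apply sum_Rle. intros k _. pose proof (pos_INR k).
    destruct (lnineq (b + INR k) (a + INR k)) as [_ B]; lra. }
  rewrite sum_scal_l in S1.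
  destruct (harm_bounds a (S n) ltac:(lra)) as [H1 _].
  pose proof (pos_INR (S n)).
  assert (ln (INR (S n)) <= ln (a + INR (S n) + 1)).
  { apply Rlt_le, ln_increasing. apply lt_0_INR; lia. lra. }
  assert ((a - b) * (ln (a + INR (S n) + 1) - ln a) <= (a - b) * sum_f_R0 (fun k => / (a + INR k)) (S n)).
  { apply Rmult_le_compat_l; lra. }
  assert ((a - b) * ln (INR (S n)) <= (a - b) * ln (a + INR (S n) + 1)).
  { apply Rmult_le_compat_l; lra. }
  nra.
Qed.

Lemma ell_lower a b : 0 < b -> b < a -> (a - b) * (ln b - / b) <= ell b - ell a.
Proof.
  intros Hb Hab. apply (lim_ge_eps _ _ _ ((a - b) * b) (D_lim a b ltac:(lra) Hb)).
  intros n. rewrite D_eq.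
  assert (S1 : sum_f_R0 (fun k => - (a - b) * / (b + INR k)) (S n)
         <= sum_f_R0 (fun k => ln (b + INR k) - ln (a + INR k)) (S n)).
  { apply sum_Rle. intros k _. pose proof (pos_INR k).
    destruct (lnineq (b + INR k) (a + INR k)) as [B _]; lra. }
  rewrite sum_scal_l in S1.
  destruct (harm_bounds b (S n) Hb) as [_ H2].
  assert (Hs : 0 < INR (S n)) by (apply lt_0_INR; lia).
  assert (Hbs : 0 < b + INR (S n)) by lra.
  destruct (lnineq (INR (S n)) (b + INR (S n)) Hs Hbs) as [L _].
  replace ((INR (S n) - (b + INR (S n))) / INR (S n)) with (- (b * / INR (S n))) in L by (field; lra).
  assert ((a - b) * sum_f_R0 (fun k => / (b + INR k)) (S n) <= (a - b) * (/ b + (ln (b + INR (S n)) - ln b))).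
  { apply Rmult_le_compat_l; lra. }
  assert ((a - b) * (- (b * / INR (S n))) <= (a - b) * (ln (INR (S n)) - ln (b + INR (S n)))).
  { apply Rmult_le_compat_l; lra. }
  nra.
Qed.

Lemma lam_diff a b : 0 < b -> b < a -> Rabs (lam b - lam a) <= (a - b) * (/ b ^ 2 + / b).
Proof.
  intros Hb Hab.
  apply (lim_abs_le (fun n => lamN b n - lamN a n)).
  apply is_lim_seq_minus'; apply lam_lim; lra.
  intros n.
  assert (E : lamN b n - lamN a n = sum_f_R0 (fun k => / (b + INR k) - / (a + INR k)) (S n)).
  { rewrite sum_lin2. unfold lamN. ring. }
  rewrite E. apply Rabs_le. split.
  - assert (0 <= sum_f_R0 (fun k => / (b + INR k) - / (a + INR k)) (S n)).
    { replace 0 with (sum_f_R0 (fun _ => 0) (S n)).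
      2:{ clear E. induction (S n); simpl; [reflexivity| rewrite IHn0; ring]. }
      apply sum_Rle. intros k _. pose proof (pos_INR k).
      assert (/ (a + INR k) <= / (b + INR k)) by (apply Rinv_le_contravar; lra). lra. }
    assert (0 <= (a - b) * (/ b ^ 2 + / b)).
    { apply Rmult_le_pos. lra.
      assert (0 < / b) by (apply Rinv_0_lt_compat; lra).
      assert (0 < / b ^ 2) by (apply Rinv_0_lt_compat; apply pow_lt; lra). lra. }
    lra.
  - eapply Rle_trans.
    2:{ apply Rmult_le_compat_l. lra. apply (sq_bound' b (S n) Hb). }
    rewrite <- sum_scal_l. apply sum_Rle. intros k _. pose proof (pos_INR k).
    replace (/ (b + INR k) - / (a + INR k)) with ((a - b) * / ((b + INR k) * (a + INR k))) by (field; lra).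
    apply Rmult_le_compat_l. lra.
    apply Rinv_le_contravar. apply pow_lt; lra. simpl. rewrite Rmult_1_r.
    apply Rmult_le_compat_l; lra.
Qed.

Fixpoint lsum (h : R -> R) (l : list (R * R)) : R :=
  match l with nil => 0 | (c, x) :: t => c * h x + lsum h t end.

Fixpoint ins (c x : R) (l : list (R * R)) : list (R * R) :=
  match l with
  | nil => if Req_EM_T c 0 then nil else (c, x) :: nil
  | (c', y) :: t =>
      if Req_EM_T x y then (if Req_EM_T (c + c') 0 then t else (c + c', y) :: t)
      else (c', y) :: ins c x t
  end.

Lemma lsum_ins h c x l : lsum h (ins c x l) = c * h x + lsum h l.
Proof.
  induction l as [|[c' y] t IH]; simpl.
  - destruct (Req_EM_T c 0); simpl; subst; ring.
  - destruct (Req_EM_T x y).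
    + subst. destruct (Req_EM_T (c + c') 0); simpl.
      * replace c' with (- c) by lra. ring.
      * ring.
    + simpl. rewrite IH. ring.
Qed.

Definition good (l : list (R * R)) :=
  NoDup (map snd l) /\ List.Forall (fun p => fst p <> 0 /\ 0 < snd p) l.

Lemma in_ins_snd c x l y : In y (map snd (ins c x l)) -> y = x \/ In y (map snd l).
Proof.
  induction l as [|[c' z] t IH]; simpl.
  - destruct (Req_EM_T c 0); simpl; intuition.
  - destruct (Req_EM_T x z).
    + destruct (Req_EM_T (c + c') 0); simpl; intuition.
    + simpl. intuition.
Qed.

Lemma nodup_ins c x l : NoDup (map snd l) -> NoDup (map snd (ins c x l)).
Proof.
  induction l as [|[c' z] t IH]; intros N.
  - unfold ins. destruct (Req_EM_T c 0); simpl.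
    + constructor.
    + constructor; [simpl; tauto| constructor].
  - simpl in N. apply NoDup_cons_iff in N. destruct N as [N1 N2].
    change (ins c x ((c', z) :: t)) with
      (if Req_EM_T x z then (if Req_EM_T (c + c') 0 then t else (c + c', z) :: t)
       else (c', z) :: ins c x t).
    destruct (Req_EM_T x z) as [e|e]; [destruct (Req_EM_T (c + c') 0)|].
    + exact N2.
    + simpl. apply NoDup_cons; auto.
    + simpl. apply NoDup_cons; auto. intros Hin. apply in_ins_snd in Hin. destruct Hin; auto.
Qed.

Lemma forall_ins c x l : 0 < x -> List.Forall (fun p => fst p <> 0 /\ 0 < snd p) l ->
  List.Forall (fun p => fst p <> 0 /\ 0 < snd p) (ins c x l).
Proof.
  intros Hx. induction l as [|[c' z] t IH]; intros F.
  - unfold ins. destruct (Req_EM_T c 0).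
    + constructor.
    + constructor; [simpl; split; auto | constructor].
  - apply Forall_cons_iff in F. destruct F as [F1 F2]. simpl in F1.
    change (ins c x ((c', z) :: t)) with
      (if Req_EM_T x z then (if Req_EM_T (c + c') 0 then t else (c + c', z) :: t)
       else (c', z) :: ins c x t).
    destruct (Req_EM_T x z) as [e|e]; [destruct (Req_EM_T (c + c') 0)|].
    + exact F2.
    + apply Forall_cons; auto. simpl. split; auto. tauto.
    + apply Forall_cons; auto.
Qed.

Lemma good_ins c x l : 0 < x -> good l -> good (ins c x l).
Proof.
  intros Hx [N F]. split. apply nodup_ins; auto. apply forall_ins; auto.
Qed.

Fixpoint grp (m : nat) (d alpha : nat -> R) : list (R * R) :=
  match m with O => nil | S k => ins (d k) (alpha k) (grp k d alpha) end.

Lemma grp_sum m d alpha h : sumR m (fun i => d i * h (alpha i)) = lsum h (grp m d alpha).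
Proof.
  induction m; simpl; auto. rewrite lsum_ins, IHm. ring.
Qed.

Lemma grp_good m d alpha : (forall i, (i < m)%nat -> 0 < alpha i) -> good (grp m d alpha).
Proof.
  induction m; intros H; simpl.
  - split; constructor.
  - apply good_ins. apply H; lia. apply IHm. intros; apply H; lia.
Qed.

Lemma lsum_app h l1 l2 : lsum h (l1 ++ l2) = lsum h l1 + lsum h l2.
Proof. induction l1 as [|[c x] t IH]; simpl; [ring| rewrite IH; ring]. Qed.

Lemma max_exists (l : list (R * R)) : l <> nil ->
  exists q, In q l /\ forall q', In q' l -> snd q' <= snd q.
Proof.
  induction l as [|a t IH]; intros Hn; [congruence|].
  destruct t as [|b t'].
  - exists a. split; simpl; auto. intros q' [E|[]]; subst; lra.
  - destruct IH as [q [Hq Hm]]; [discriminate|].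
    destruct (Rle_dec (snd a) (snd q)).
    + exists q. split; [right; auto|]. intros q' [E|H]; subst; auto.
    + exists a. split; [left; auto|]. intros q' [E|H]; subst; [lra|].
      specialize (Hm q' H). lra.
Qed.

Lemma lead (l : list (R * R)) : good l -> l <> nil ->
  exists c p l', c <> 0 /\ 0 < p /\ (forall h, lsum h l = c * h p + lsum h l') /\
    List.Forall (fun q => fst q <> 0 /\ 0 < snd q /\ snd q < p) l'.
Proof.
  intros [N F] Hn. destruct (max_exists l Hn) as [[c p] [Hin Hmax]].
  destruct (in_split _ _ Hin) as [l1 [l2 E]]. subst l.
  rewrite Forall_forall in F.
  destruct (F (c, p)) as [Hc Hp]. apply in_or_app; simpl; auto.
  exists c, p, (l1 ++ l2). split; auto. split; auto. split.
  - intros h. rewrite !lsum_app. simpl. ring.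
  - rewrite map_app in N. simpl in N. apply NoDup_remove_2 in N.
    apply Forall_forall. intros q Hq.
    assert (Hq' : In q (l1 ++ (c, p) :: l2)).
    { apply in_app_or in Hq. apply in_or_app. simpl. tauto. }
    destruct (F q Hq') as [A B]. split; auto. split; auto.
    specialize (Hmax q Hq'). simpl in Hmax. destruct (Req_dec (snd q) p).
    + exfalso. apply N. rewrite <- map_app. rewrite <- H. apply in_map. auto.
    + lra.
Qed.

Definition pw (a s : R) : R := exp (s * ln a).

Fixpoint labs (M : R -> R) (l : list (R * R)) : R :=
  match l with nil => 0 | (c, x) :: t => Rabs c * M x + labs M t end.

Lemma lsum_abs h M l : List.Forall (fun q => Rabs (h (snd q)) <= M (snd q)) l ->
  Rabs (lsum h l) <= labs M l.
Proof.
  induction l as [|[c x] t IH]; intros F; simpl.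
  - rewrite Rabs_R0; lra.
  - apply Forall_cons_iff in F as [F1 F2]. simpl in F1.
    eapply Rle_trans. apply Rabs_triang. rewrite Rabs_mult.
    apply Rplus_le_compat; auto. apply Rmult_le_compat_l; auto. apply Rabs_pos.
Qed.

Lemma labs_scal k M l : labs (fun s => k * M s) l = k * labs M l.
Proof. induction l as [|[c x] t IH]; simpl; [ring| rewrite IH; ring]. Qed.

Lemma labs_nonneg M l : List.Forall (fun q => 0 <= M (snd q)) l -> 0 <= labs M l.
Proof.
  induction l as [|[c x] t IH]; intros F; simpl. lra.
  apply Forall_cons_iff in F as [F1 F2]. simpl in F1.
  pose proof (IH F2). pose proof (Rabs_pos c).
  pose proof (Rmult_le_pos _ _ H0 F1). lra.
Qed.

Lemma exp_ge_id t : t <= exp t.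
Proof. pose proof (exp_ineq1_le t); lra. Qed.

Lemma pw_mono a s p : 1 <= a -> s <= p -> pw a s <= pw a p.
Proof.
  intros Ha Hs. unfold pw. 
  assert (0 <= ln a) by (rewrite <- ln_1; apply ln_le; lra).
  assert (s * ln a <= p * ln a) by (apply Rmult_le_compat_r; lra).
  destruct (Req_dec (s * ln a) (p * ln a)) as [E|E]. rewrite E; lra.
  apply Rlt_le, exp_increasing. lra.
Qed.

Lemma small_list (p : R) (l : list (R * R)) :
  List.Forall (fun q => 0 < snd q /\ snd q < p) l ->
  forall eps, 0 < eps -> exists A0, 1 <= A0 /\ forall a, A0 <= a -> labs (fun s => pw a s) l <= eps * pw a p.
Proof.
  induction l as [|[c s] t IH]; intros F eps He.
  - exists 1. split. lra. intros a Ha. simpl. pose proof (exp_pos (p * ln a)). unfold pw. nra.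
  - apply Forall_cons_iff in F as [F1 F2]. simpl in F1.
    destruct (IH F2 (eps / 2) ltac:(lra)) as [A0 [HA0 HA]].
    set (T := 2 * Rabs c / (eps * (p - s))).
    exists (Rmax A0 (exp T)). split. eapply Rle_trans; [apply HA0 | apply Rmax_l].
    intros a Ha. simpl.
    pose proof (Rmax_l A0 (exp T)). pose proof (Rmax_r A0 (exp T)).
    specialize (HA a ltac:(lra)).
    assert (Hlna : T <= ln a).
    { rewrite <- (ln_exp T). apply ln_le. apply exp_pos. lra. }
    assert (E : pw a p = pw a s * exp ((p - s) * ln a)).
    { unfold pw. rewrite <- exp_plus. f_equal. ring. }
    assert (Hps : 0 < p - s) by lra.
    assert (HT : 2 * Rabs c / eps <= exp ((p - s) * ln a)).
    { eapply Rle_trans; [| apply exp_ge_id].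
      replace (2 * Rabs c / eps) with ((p - s) * T) by (unfold T; field; lra).
      apply Rmult_le_compat_l; lra. }
    assert (Rabs c * pw a s <= eps / 2 * pw a p).
    { rewrite E. assert (0 < pw a s) by apply exp_pos.
      assert (Rabs c <= eps / 2 * exp ((p - s) * ln a)).
      { apply (Rmult_le_compat_l (eps / 2)) in HT; [|lra].
        replace (eps / 2 * (2 * Rabs c / eps)) with (Rabs c) in HT by (field; lra). lra. }
      nra. }
    lra.
Qed.

Lemma gr_upper a s : 0 < s -> s < a -> 0 < gratio a (a - s) <= pw a s.
Proof.
  intros Hs Ha. rewrite gratio_exp by lra. split. apply exp_pos.
  unfold pw. destruct (Req_dec (ell (a - s) - ell a) (s * ln a)) as [E|E].
  rewrite E; lra. apply Rlt_le, exp_increasing.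
  pose proof (ell_upper a (a - s) ltac:(lra) ltac:(lra)).
  replace (a - (a - s)) with s in H by ring. lra.
Qed.

Lemma gr_lower a p : 0 < p -> 2 * p <= a ->
  exp (-1) * exp (- (p * ln 2)) * pw a p <= gratio a (a - p).
Proof.
  intros Hp Ha. rewrite gratio_exp by lra.
  pose proof (ell_lower a (a - p) ltac:(lra) ltac:(lra)) as L.
  replace (a - (a - p)) with p in L by ring.
  unfold pw. rewrite <- !exp_plus.
  assert (-1 + - (p * ln 2) + p * ln a <= p * (ln (a - p) - / (a - p))).
  { assert (ln a - ln 2 <= ln (a - p)).
    { rewrite <- ln_div by lra. apply ln_le. apply Rdiv_lt_0_compat; lra.
      apply (Rmult_le_reg_r 2); [lra|]. unfold Rdiv. rewrite Rmult_assoc, Rinv_l, Rmult_1_r; lra. }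
    assert (p * / (a - p) <= 1).
    { apply (Rmult_le_reg_r (a - p)); [lra|]. rewrite Rmult_assoc, Rinv_l by lra. lra. }
    assert (p * (ln a - ln 2) <= p * ln (a - p)) by (apply Rmult_le_compat_l; lra).
    nra. }
  destruct (Req_dec (-1 + - (p * ln 2) + p * ln a) (ell (a - p) - ell a)) as [E|E].
  rewrite E; lra. apply Rlt_le, exp_increasing. lra.
Qed.

Lemma grpsi_bound a s : 0 < s -> 2 * s <= a ->
  Rabs (gratio_psi a (a - s)) <= pw a s * (/ s + 1).
Proof.
  intros Hs Ha. rewrite gratio_psi_eq by lra. rewrite Rabs_mult.
  destruct (gr_upper a s Hs ltac:(lra)) as [G1 G2].
  rewrite Rabs_pos_eq by lra.
  apply Rmult_le_compat; try lra. apply Rabs_pos.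
  eapply Rle_trans. apply lam_diff; lra.
  replace (a - (a - s)) with s by ring.
  assert (/ (a - s) <= / s) by (apply Rinv_le_contravar; lra).
  assert (/ (a - s) ^ 2 <= / s ^ 2).
  { apply Rinv_le_contravar. apply pow_lt; lra. apply pow_incr; lra. }
  assert (s * / s ^ 2 = / s) by (field; lra).
  assert (s * / s = 1) by (field; lra).
  assert (0 < / s) by (apply Rinv_0_lt_compat; lra).
  nra.
Qed.

Lemma growth (c p : R) (l' : list (R * R)) : c <> 0 -> 0 < p ->
  List.Forall (fun q => fst q <> 0 /\ 0 < snd q /\ snd q < p) l' ->
  exists kap K A1, 0 < kap /\ 0 <= K /\ 1 <= A1 /\ forall a, A1 <= a ->
    kap * pw a p <= Rabs (c * gratio a (a - p) + lsum (fun s => gratio a (a - s)) l') /\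
    Rabs (c * gratio_psi a (a - p) + lsum (fun s => gratio_psi a (a - s)) l') <= K * pw a p.
Proof.
  intros Hc Hp F.
  set (k0 := exp (-1) * exp (- (p * ln 2))).
  assert (Hk0 : 0 < k0) by (apply Rmult_lt_0_compat; apply exp_pos).
  assert (Hca : 0 < Rabs c) by (apply Rabs_pos_lt; auto).
  assert (F' : List.Forall (fun q => 0 < snd q /\ snd q < p) l').
  { eapply Forall_impl; [| exact F]. simpl; tauto. }
  destruct (small_list p l' F' (Rabs c * k0 / 2)) as [A0 [HA0 HA]].
  { apply Rdiv_lt_0_compat; [apply Rmult_lt_0_compat|]; lra. }
  exists (Rabs c * k0 / 2), (Rabs c * (/ p + 1) + labs (fun s => / s + 1) l'), (Rmax (2 * p) A0).
  split. apply Rdiv_lt_0_compat; [apply Rmult_lt_0_compat|]; lra.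
  split.
  { apply Rplus_le_le_0_compat.
    apply Rmult_le_pos. lra. assert (0 < / p) by (apply Rinv_0_lt_compat; lra). lra.
    apply labs_nonneg. eapply Forall_impl; [| exact F]. simpl. intros q [_ [H _]].
    assert (0 < / snd q) by (apply Rinv_0_lt_compat; lra). lra. }
  split. eapply Rle_trans; [apply HA0 | apply Rmax_r].
  intros a Ha. pose proof (Rmax_l (2 * p) A0). pose proof (Rmax_r (2 * p) A0).
  assert (Ha1 : 1 <= a) by lra.
  assert (Hpw : 0 < pw a p) by apply exp_pos.
  split.
  - specialize (HA a ltac:(lra)).
    assert (L : Rabs (lsum (fun s => gratio a (a - s)) l') <= labs (fun s => pw a s) l').
    { apply lsum_abs. eapply Forall_impl; [| exact F]. simpl. intros q [_ [H1 H2]].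
      destruct (gr_upper a (snd q) H1 ltac:(lra)). rewrite Rabs_pos_eq; lra. }
    pose proof (gr_lower a p Hp ltac:(lra)). fold k0 in H1.
    assert (G : Rabs (c * gratio a (a - p)) >= Rabs c * (k0 * pw a p)).
    { rewrite Rabs_mult. apply Rle_ge. apply Rmult_le_compat_l. lra.
      eapply Rle_trans; [exact H1| apply RRle_abs]. }
    pose proof (Rabs_triang_inv (c * gratio a (a - p)) (- lsum (fun s => gratio a (a - s)) l')).
    rewrite Rabs_Ropp in H2.
    replace (c * gratio a (a - p) - - lsum (fun s => gratio a (a - s)) l') with
      (c * gratio a (a - p) + lsum (fun s => gratio a (a - s)) l') in H2 by ring.
    set (X := Rabs c * (k0 * pw a p)) in *.
    replace (Rabs c * k0 / 2 * pw a p) with (X / 2) in * by (unfold X; field).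
    lra.
  - eapply Rle_trans. apply Rabs_triang.
    rewrite Rmult_plus_distr_r.
    apply Rplus_le_compat.
    + rewrite Rabs_mult. rewrite Rmult_assoc. apply Rmult_le_compat_l. apply Rabs_pos.
      rewrite Rmult_comm. apply grpsi_bound; lra.
    + rewrite Rmult_comm, <- labs_scal. apply lsum_abs.
      eapply Forall_impl; [| exact F]. simpl. intros q [_ [H1 H2]].
      eapply Rle_trans. apply grpsi_bound; lra.
      apply Rmult_le_compat_r. assert (0 < / snd q) by (apply Rinv_0_lt_compat; lra). lra.
      apply pw_mono; lra.
Qed.

Lemma key (m : nat) (d alpha : nat -> R) (beta nu gamma : R) :
  (forall i, (i < m)%nat -> 0 < alpha i) ->
  0 < beta -> -1 < gamma ->
  Derive_n (Gfun m d alpha) 2 gamma <> 0 ->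
  exists K, 0 <= K /\ forall R, exists N0, forall n, (N0 <= n)%nat ->
    R <= Rabs (A_n m d alpha beta gamma n - nu ^ 2) /\
    Rabs (B_n m d alpha beta gamma n) <= K * Rabs (A_n m d alpha beta gamma n - nu ^ 2).
Proof.
  intros Hal Hb Hg HD.
  set (l := grp m d alpha).
  assert (Hgood : good l) by (apply grp_good; auto).
  assert (EA : forall t, Gfun m d alpha t = lsum (fun s => gratio (1 + t) (1 + t - s)) l).
  { intros t. exact (grp_sum m d alpha (fun s => gratio (1 + t) (1 + t - s))). }
  assert (EB : forall n, B_n m d alpha beta gamma n =
     lsum (fun s => gratio_psi (1 + gamma + beta * INR n) (1 + gamma + beta * INR n - s)) l).
  { intros n. exact (grp_sum m d alpha (fun s => gratio_psi (1 + gamma + beta * INR n) (1 + gamma + beta * INR n - s))). }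
  assert (Hcase : l = nil \/ l <> nil) by (destruct l; [left|right]; congruence).
  destruct Hcase as [El|El].
  - exfalso. apply HD.
    rewrite (Derive_n_ext _ (fun _ => 0)). apply Derive_n_const.
    intros t. rewrite EA, El. reflexivity.
  - destruct (lead l Hgood El) as [c [p [l' [Hc [Hp [Hs F]]]]]].
    destruct (growth c p l' Hc Hp F) as [kap [K [A1 [Hk [HK [HA1 HG]]]]]].
    exists (4 * K / kap). split.
    { apply Rmult_le_pos. lra. left; apply Rinv_0_lt_compat; lra. }
    intros R.
    set (T := 4 * (nu ^ 2 + Rabs R) / kap).
    set (A2 := Rmax A1 (exp (T / p))).
    destruct (INR_unbounded ((A2 - 1 - gamma) / beta)) as [N0 HN0].
    exists N0. intros n Hn.
    set (a := 1 + gamma + beta * INR n).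
    assert (Ha2 : A2 <= a).
    { apply le_INR in Hn. unfold a.
      assert (beta * ((A2 - 1 - gamma) / beta) = A2 - 1 - gamma) by (field; lra).
      assert (beta * ((A2 - 1 - gamma) / beta) <= beta * INR n).
      { apply Rmult_le_compat_l; lra. }
      lra. }
    assert (HA1a : A1 <= a) by (pose proof (Rmax_l A1 (exp (T / p))); unfold A2 in Ha2; lra).
    assert (HEa : exp (T / p) <= a) by (pose proof (Rmax_r A1 (exp (T / p))); unfold A2 in Ha2; lra).
    destruct (HG a HA1a) as [G1 G2].
    assert (EAn : A_n m d alpha beta gamma n = c * gratio a (a - p) + lsum (fun s => gratio a (a - s)) l').
    { unfold A_n. rewrite EA. rewrite Hs.
      replace (1 + (gamma + beta * INR n)) with a by (unfold a; ring). reflexivity. }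
    assert (EBn : B_n m d alpha beta gamma n = c * gratio_psi a (a - p) + lsum (fun s => gratio_psi a (a - s)) l').
    { rewrite EB. rewrite Hs. reflexivity. }
    rewrite EAn, EBn.
    assert (Hpw : T <= pw a p).
    { unfold pw. eapply Rle_trans; [| apply exp_ineq1_le].
      assert (H0 : T / p <= ln a).
      { rewrite <- (ln_exp (T / p)). apply ln_le. apply exp_pos. lra. }
      assert (H1 : p * (T / p) <= p * ln a) by (apply Rmult_le_compat_l; lra).
      replace (p * (T / p)) with T in H1 by (field; lra).
      assert (0 <= ln a).
      { rewrite <- ln_1. apply ln_le; lra. }
      nra. }
    set (AA := c * gratio a (a - p) + lsum (fun s => gratio a (a - s)) l') in *.
    set (BB := c * gratio_psi a (a - p) + lsum (fun s => gratio_psi a (a - s)) l') in *.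
    set (X := kap * pw a p) in *.
    assert (HX : 4 * (nu ^ 2 + Rabs R) <= X).
    { unfold X. apply (Rmult_le_compat_l kap) in Hpw; [|lra].
      replace (kap * T) with (4 * (nu ^ 2 + Rabs R)) in Hpw by (unfold T; field; lra). lra. }
    pose proof (Rabs_triang_inv AA (nu ^ 2)) as H1.
    rewrite (Rabs_pos_eq (nu ^ 2)) in H1 by (apply pow2_ge_0).
    pose proof (Rle_abs R). pose proof (pow2_ge_0 nu).
    pose proof (Rabs_pos R).
    assert (LB : X / 4 + Rabs R <= Rabs (AA - nu ^ 2)) by lra.
    split. lra.
    assert (BB' : Rabs BB <= 4 * K / kap * (X / 4)).
    { replace (4 * K / kap * (X / 4)) with (K * pw a p) by (unfold X; field; lra). exact G2. }
    eapply Rle_trans. exact BB'.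
    apply Rmult_le_compat_l. apply Rmult_le_pos; [lra| left; apply Rinv_0_lt_compat; lra].
    pose proof (Rabs_pos R). lra.
Qed.

Lemma series_conv (u v D B : nat -> R) (K g b x : R) :
  0 <= K -> 0 < x ->
  (forall n, u (S n) = - u n / D (S n)) ->
  (forall n, v (S n) = - (v n + u (S n) * B (S n)) / D (S n)) ->
  (forall R, exists N0, forall n, (N0 <= n)%nat -> R <= Rabs (D n) /\ Rabs (B n) <= K * Rabs (D n)) ->
  ex_series (fun n => u n * Rpower x (g + b * INR n)) /\ ex_series (fun n => v n * Rpower x (g + b * INR n)).
Proof.
  intros HK Hx Hu Hv Hev.
  set (r := Rpower x b). set (C := Rpower x g).
  assert (Hr : 0 < r) by (unfold r, Rpower; apply exp_pos).
  assert (HC : 0 < C) by (unfold C, Rpower; apply exp_pos).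
  assert (EP : forall n, Rpower x (g + b * INR n) = C * r ^ n).
  { intros n. rewrite Rpower_plus. unfold C. f_equal.
    rewrite <- Rpower_mult. apply Rpower_pow. exact Hr. }
  destruct (Hev (4 * r + 1)) as [N0 HN0].
  set (V := fun n => Rabs (u n) * r ^ n).
  set (U := fun n => Rabs (v n) * r ^ n).
  set (W := fun n => U n + (4 * K + 1) * V n).
  assert (HV0 : forall n, 0 <= V n).
  { intros n; unfold V. apply Rmult_le_pos. apply Rabs_pos. apply pow_le; lra. }
  assert (HU0 : forall n, 0 <= U n).
  { intros n; unfold U. apply Rmult_le_pos. apply Rabs_pos. apply pow_le; lra. }
  assert (Step : forall n, (N0 <= n)%nat -> V (S n) <= V n / 4 /\ W (S n) <= W n / 2).
  { intros n Hn. destruct (HN0 (S n) ltac:(lia)) as [D1 D2].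
    set (dd := Rabs (D (S n))) in *.
    assert (Hd : 0 < dd) by lra.
    assert (Hrd : r * / dd <= / 4).
    { apply (Rmult_le_reg_r dd); [lra|]. rewrite Rmult_assoc, Rinv_l, Rmult_1_r by lra.
      lra. }
    assert (Eu : Rabs (u (S n)) = Rabs (u n) * / dd).
    { rewrite Hu. unfold Rdiv. rewrite Rabs_mult, Rabs_Ropp, Rabs_inv. reflexivity. }
    assert (EV : V (S n) = V n * (r * / dd)).
    { unfold V. rewrite Eu. simpl. ring. }
    assert (Hv' : Rabs (v (S n)) <= Rabs (v n) * / dd + K * Rabs (u (S n))).
    { rewrite Hv. unfold Rdiv. rewrite Rabs_mult, Rabs_Ropp, Rabs_inv. fold dd.
      eapply Rle_trans. apply Rmult_le_compat_r. left; apply Rinv_0_lt_compat; lra.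
      apply Rabs_triang. rewrite Rabs_mult.
      assert (Rabs (u (S n)) * Rabs (B (S n)) * / dd <= K * Rabs (u (S n))).
      { assert (Q : Rabs (u (S n)) * Rabs (B (S n)) <= Rabs (u (S n)) * (K * dd))
          by (apply Rmult_le_compat_l; [apply Rabs_pos| lra]).
        apply (Rmult_le_compat_r (/ dd)) in Q; [|left; apply Rinv_0_lt_compat; lra].
        replace (Rabs (u (S n)) * (K * dd) * / dd) with (K * Rabs (u (S n))) in Q by (field; lra).
        exact Q. }
      lra. }
    assert (EU : U (S n) <= U n * (r * / dd) + K * V (S n)).
    { unfold U, V. simpl.
      assert (Hq : 0 <= r * r ^ n) by (apply Rmult_le_pos; [lra| apply pow_le; lra]).
      pose proof (Rmult_le_compat_r _ _ _ Hq Hv') as Hv2. clear Hv'.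
      replace (Rabs (v n) * r ^ n * (r * / dd)) with (Rabs (v n) * / dd * (r * r ^ n)) by ring.
      replace (K * (Rabs (u (S n)) * (r * r ^ n))) with (K * Rabs (u (S n)) * (r * r ^ n)) by ring.
      lra. }
    pose proof (HV0 n). pose proof (HU0 n).
    assert (Hrd0 : 0 <= r * / dd) by (apply Rmult_le_pos; [lra| left; apply Rinv_0_lt_compat; lra]).
    assert (V (S n) <= V n / 4).
    { rewrite EV. pose proof (Rmult_le_compat_l _ _ _ (HV0 n) Hrd). lra. }
    assert (U n * (r * / dd) <= U n / 4).
    { pose proof (Rmult_le_compat_l _ _ _ (HU0 n) Hrd). lra. }
    split; auto. unfold W.
    assert ((4 * K + 1 + K) * V (S n) <= (4 * K + 1 + K) * (V n / 4)).
    { apply Rmult_le_compat_l; lra. }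
    nra. }
  assert (Geo : forall k, W (N0 + k)%nat <= W N0 * (/ 2) ^ k).
  { induction k.
    - rewrite Nat.add_0_r. simpl. lra.
    - replace (N0 + S k)%nat with (S (N0 + k)) by lia.
      destruct (Step (N0 + k)%nat ltac:(lia)) as [_ S2].
      simpl. lra. }
  assert (VW : forall n, V n <= W n).
  { intros n. unfold W. pose proof (HV0 n). pose proof (HU0 n).
    assert (V n <= (4 * K + 1) * V n) by nra. lra. }
  assert (UW : forall n, U n <= W n).
  { intros n. unfold W. pose proof (HV0 n). pose proof (HU0 n).
    assert (0 <= (4 * K + 1) * V n) by (apply Rmult_le_pos; lra). lra. }
  assert (Gs : ex_series (fun k => C * W N0 * (/ 2) ^ k)).
  { apply (ex_series_scal (C * W N0) (fun k => (/ 2) ^ k)).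
    apply ex_series_geom. rewrite Rabs_pos_eq; lra. }
  split.
  - apply (proj2 (ex_series_incr_n _ N0)).
    apply (@ex_series_le R_AbsRing R_CompleteNormedModule _ (fun k => C * W N0 * (/ 2) ^ k)); auto.
    intros k. change (norm ?z) with (Rabs z).
    rewrite EP. rewrite Rabs_mult, Rabs_mult, (Rabs_pos_eq C) by lra.
    rewrite (Rabs_pos_eq (r ^ _)) by (apply pow_le; lra).
    specialize (VW (N0 + k)%nat). specialize (Geo k). unfold V in VW.
    replace (Rabs (u (N0 + k)%nat) * (C * r ^ (N0 + k))) with (C * (Rabs (u (N0 + k)%nat) * r ^ (N0 + k))) by ring.
    rewrite Rmult_assoc. apply Rmult_le_compat_l. lra. lra.
  - apply (proj2 (ex_series_incr_n _ N0)).
    apply (@ex_series_le R_AbsRing R_CompleteNormedModule _ (fun k => C * W N0 * (/ 2) ^ k)); auto.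
    intros k. change (norm ?z) with (Rabs z).
    rewrite EP. rewrite Rabs_mult, Rabs_mult, (Rabs_pos_eq C) by lra.
    rewrite (Rabs_pos_eq (r ^ _)) by (apply pow_le; lra).
    specialize (UW (N0 + k)%nat). specialize (Geo k). unfold U in UW.
    replace (Rabs (v (N0 + k)%nat) * (C * r ^ (N0 + k))) with (C * (Rabs (v (N0 + k)%nat) * r ^ (N0 + k))) by ring.
    rewrite Rmult_assoc. apply Rmult_le_compat_l. lra. lra.
Qed.

Theorem lemma4p1 (m : nat) (d alpha : nat -> R) (beta nu gamma c10 c20 : R) :
  (forall i, (i < m)%nat -> 0 < alpha i) ->
  0 < beta ->
  -1 < gamma ->
  Gfun m d alpha gamma = nu ^ 2 ->
  Derive (Gfun m d alpha) gamma = 0 ->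
  Derive_n (Gfun m d alpha) 2 gamma <> 0 ->
  (forall n : nat, (1 <= n)%nat -> Gfun m d alpha (gamma + beta * INR n) <> nu ^ 2) ->
  forall x : R, 0 < x ->
    ex_series (fun n => coef1 m d alpha beta gamma nu c10 n * Rpower x (gamma + beta * INR n)) /\
    ex_series (fun n => coef2 m d alpha beta gamma nu c10 c20 n * Rpower x (gamma + beta * INR n)).
Proof.
  intros Hal Hb Hg HG0 HD1 HD2 Hno x Hx.
  destruct (key m d alpha beta nu gamma Hal Hb Hg HD2) as [K [HK Hev]].
  apply (series_conv (coef1 m d alpha beta gamma nu c10) (coef2 m d alpha beta gamma nu c10 c20)
           (fun n => A_n m d alpha beta gamma n - nu ^ 2) (B_n m d alpha beta gamma) K gamma beta x HK Hx).
  - intros n; reflexivity.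
  - intros n; reflexivity.
  - exact Hev.
Qed.
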